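(* Let $f:\mathbb{Z}^n\to\mathbb{Z}\cup\{+\infty\}$ be an integer-valued M-convex function with bounded $\operatorname{dom} f$ and $x_0\in\operatorname{dom} f$. If algorithm M-LSD2 started at $x_0$ performs exactly $k$ calls of M-IncSlope before terminating, then $\tfrac12 k^2\le f(x_0)-\min\{f(x): x\in\operatorname{dom} f\}$; hence $k\le\sqrt{2\,(f(x_0)-\min f)}$.
   Context: $N=\{1,\dots,n\}$; $\chi_i\in\{0,1\}^n$ is the $i$-th unit vector. For $f:\mathbb{Z}^n\to\mathbb{R}\cup\{+\infty\}$, $\operatorname{dom} f=\{x\in\mathbb{Z}^n: f(x)<+\infty\}$. $f$ is M-convex if $\operatorname{dom} f\neq\emptyset$ and for all $x,y\in\operatorname{dom} f$ and every $i$ with $x(i)>y(i)$ there is $j$ with $x(j)<y(j)$ such that $f(x)+f(y)\ge f(x-\chi_i+\chi_j)+f(y+\chi_i-\chi_j)$. For $x\in\operatorname{dom} f$ and $i,j\in N$, $f'(x;i,j)=f(x+\chi_i-\chi_j)-f(x)$ (possibly $+\infty$; $f'(x;i,i)=0$), and $\phi(x)=\min_{i,j\in N}f'(x;i,j)$. Step length: $\bar c(y;i,j)=\max\{\lambda\in\mathbb{Z}_{\ge 0}: f(y+\lambda(\chi_i-\chi_j))-f(y)=\lambda f'(y;i,j)\}$. Procedure M-IncSlope$(x)$ (for $\phi(x)<0$): set $y:=x$; for each $i\in N$ (each once, arbitrary order) and for each $j\in N\setminus\{i\}$ (each once, arbitrary order), if $f'(y;i,j)=\phi(x)$ replace $y$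 by $y+\bar c(y;i,j)(\chi_i-\chi_j)$; output $y$. Algorithm M-LSD2: $x:=x_0$; while $\phi(x)<0$, replace $x$ by the output of M-IncSlope$(x)$; output $x$ once $\phi(x)=0$. *)

(* Defs.v *)
From mathcomp Require Import all_boot all_order all_algebra.
Set Implicit Arguments. Unset Strict Implicit. Unset Printing Implicit Defensive.
Import Order.TTheory GRing.Theory Num.Theory.
Local Open Scope ring_scope.

(* Points of Z^n are finite functions 'I_n -> int (extensional equality).
   Values of f live in Z ∪ {+oo}, encoded as option int (None = +oo). *)
Definition vec (n : nat) := {ffun 'I_n -> int}.
Definition efun (n : nat) := vec n -> option int.

Section MLSD.
Variables (n : nat) (f : efun n).

Definition in_dom (x : vec n) : Prop := f x <> None.

Definition chi (i : 'I_n) : vec n := [ffun k => ((k == i) : nat)%:Z].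

Definition shift (x : vec n) (i j : 'I_n) (lam : int) : vec n :=
  [ffun k => x k + lam * (chi i k - chi j k)].

Definition bounded_dom : Prop :=
  exists B : int, forall x, in_dom x -> forall k, `|x k| <= B.

Definition M_convex : Prop :=
  (exists x, in_dom x) /\
  forall x y, in_dom x -> in_dom y -> forall i, x i > y i ->
    exists j, x j < y j /\
      exists fx fy a b, f x = Some fx /\ f y = Some fy /\
        f (shift x j i 1) = Some a /\ f (shift y i j 1) = Some b /\
        fx + fy >= a + b.
(* note: shift x j i 1 = x - chi_i + chi_j, shift y i j 1 = y + chi_i - chi_j;
   the inequality f(x)+f(y) >= (possibly +oo) forces both values finite. *)

Definition fder (x : vec n) (i j : 'I_n) : option int :=
  match f (shift x i j 1), f x with
  | Some a, Some b => Some (a - b)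
  | _, _ => None
  end.

(* phi(x) = min_{i,j} f'(x;i,j).  For x in dom, f'(x;i,i) = 0 is among
   the values, so +oo values (mapped to 0 here) never affect the minimum. *)
Definition phi (x : vec n) : int :=
  \big[Order.min/0]_(i : 'I_n) \big[Order.min/0]_(j : 'I_n)
     (match fder x i j with Some v => v | None => 0 end).

Definition step_ok (y : vec n) (i j : 'I_n) (lam : int) : Prop :=
  exists fy d, f y = Some fy /\ fder y i j = Some d /\
    f (shift y i j lam) = Some (fy + lam * d).

Definition is_cbar (y : vec n) (i j : 'I_n) (c : int) : Prop :=
  0 <= c /\ step_ok y i j c /\ (forall lam, 0 <= lam -> step_ok y i j lam -> lam <= c).

Fixpoint inner_run (ph : int) (i : 'I_n) (js : seq 'I_n) (y y' : vec n) : Prop :=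
  match js with
  | [::] => y' = y
  | j :: js' => exists y1,
      (if fder y i j == Some ph
       then exists c, is_cbar y i j c /\ y1 = shift y i j c
       else y1 = y) /\ inner_run ph i js' y1 y'
  end.

Fixpoint outer_run (ph : int) (ord : seq 'I_n) (js : 'I_n -> seq 'I_n)
    (y y' : vec n) : Prop :=
  match ord with
  | [::] => y' = y
  | i :: is' => exists y1, inner_run ph i (js i) y y1 /\ outer_run ph is' js y1 y'
  end.

Definition M_IncSlope (x y : vec n) : Prop :=
  exists (ord : seq 'I_n) (js : 'I_n -> seq 'I_n),
    perm_eq ord (enum 'I_n) /\
    (forall i, perm_eq (js i) [seq j <- enum 'I_n | j != i]) /\
    outer_run (phi x) ord js x y.

Definition LSD2_run (x0 : vec n) (k : nat) : Prop :=
  exists xs : nat -> vec n,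
    xs 0%N = x0 /\
    (forall t, (t < k)%N -> phi (xs t) < 0 /\ M_IncSlope (xs t) (xs t.+1)) /\
    phi (xs k) = 0.

End MLSD.

(* Main.v *)
Require Import Defs.
From mathcomp Require Import all_boot all_order all_algebra.
From mathcomp Require Import zify ring lra.
Import Order.TTheory GRing.Theory Num.Theory.
Local Open Scope ring_scope.
Set Implicit Arguments. Unset Strict Implicit.

Section Basics.
Variable n : nat.
Variable f : efun n.

Lemma shiftE (x : vec n) i j l k :
  shift x i j l k = x k + l * ((k == i)%:Z - (k == j)%:Z).
Proof. by rewrite /shift /chi !ffunE. Qed.

Lemma shift_add (x : vec n) i j a b :
  shift (shift x i j a) i j b = shift x i j (a + b).
Proof. apply/ffunP => k; rewrite !shiftE; ring. Qed.

Lemma shift0 (x : vec n) i j : shift x i j 0 = x.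
Proof. apply/ffunP => k; rewrite !shiftE; ring. Qed.

Lemma shift_ii (x : vec n) i l : shift x i i l = x.
Proof. apply/ffunP => k; rewrite !shiftE; ring. Qed.

Lemma fderE (x : vec n) i j a b :
  f x = Some a -> f (shift x i j 1) = Some b -> fder f x i j = Some (b - a).
Proof. by rewrite /fder => -> ->. Qed.

Lemma fderS (x : vec n) i j d :
  fder f x i j = Some d -> exists a, f x = Some a /\ f (shift x i j 1) = Some (a + d).
Proof.
rewrite /fder; case: (f (shift x i j 1)) => [b|] //; case: (f x) => [a|] // [<-].
by exists a; split => //; congr Some; ring.
Qed.

Lemma fder_ii (x : vec n) i a : f x = Some a -> fder f x i i = Some 0.
Proof. by move=> H; rewrite (@fderE x i i a a) ?shift_ii // subrr. Qed.

Lemma phiP (y : vec n) (be : int) : be <= 0 ->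
  (be <= phi f y <-> forall a b v, fder f y a b = Some v -> be <= v).
Proof.
move=> hb; split.
  move=> H a b v Hv; apply: (le_trans H); rewrite /phi.
  apply: le_trans; first exact: (bigmin_le _ a).
  apply: le_trans; first exact: (bigmin_le _ b).
  by rewrite Hv.
move=> H; rewrite /phi; apply: (big_ind (fun v => be <= v)) => //.
  by move=> u w hu hw; rewrite le_min hu hw.
move=> a _; apply: (big_ind (fun v => be <= v)) => //.
  by move=> u w hu hw; rewrite le_min hu hw.
move=> b _; case E: (fder f y a b) => [v|] //; exact: H E.
Qed.

Lemma phi_dom (y : vec n) : phi f y < 0 -> exists v, f y = Some v.
Proof.
case E: (f y) => [v|]; first by exists v.
move=> hlt; suff: 0 <= phi f y by rewrite leNgt hlt.
apply/phiP => // a b v; by rewrite /fder E; case: (f _).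
Qed.

End Basics.

Section Core.
Variable n : nat.
Variable f : efun n.
Hypothesis Hex : forall x y, in_dom f x -> in_dom f y -> forall i, x i > y i ->
    exists j, x j < y j /\
      exists fx fy a b, f x = Some fx /\ f y = Some fy /\
        f (shift x j i 1) = Some a /\ f (shift y i j 1) = Some b /\
        fx + fy >= a + b.
Variable al : int.
Hypothesis al_neg : al < 0.

Definition lower (y : vec n) := forall a b v, fder f y a b = Some v -> al <= v.

Lemma lowS y fy c d w : lower y -> f y = Some fy -> f (shift y c d 1) = Some w -> fy + al <= w.
Proof. move=> Hl Hy Hw; have := Hl _ _ _ (fderE Hy Hw); lia. Qed.

Lemma fder_ne y fy c d w : f y = Some fy -> f (shift y c d 1) = Some w ->
  fder f y c d <> Some al -> w - fy <> al.
Proof. by move=> Hy Hw; rewrite (fderE Hy Hw) => H e; apply: H; rewrite e. Qed.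

Lemma core y i j a b fy vz : lower y -> f y = Some fy ->
  f (shift y i j 1) = Some (fy + al) -> f (shift (shift y i j 1) a b 1) = Some vz ->
  fy + 2 * al <= vz /\
  (fder f y a b <> Some al -> (a = i \/ fder f y a j <> Some al) -> fy + 2 * al + 1 <= vz).
Proof.
move=> Hl Hy Hy' Hz.
case: (eqVneq a b) => [eab|nab].
  subst b; rewrite shift_ii Hy' in Hz; case: Hz => <-; split; lia.
case: (eqVneq a j) => [eaj|naj].
  have E : shift (shift y i j 1) a b 1 = shift y i b 1.
    by subst; apply/ffunP => k; rewrite !shiftE; ring.
  rewrite E in Hz; have := lowS Hl Hy Hz; split; lia.
have := Hex (x := shift (shift y i j 1) a b 1) (y := y) _ _ (i := a).
case => [|||m [hm [fz [fy2 [A [B [Ez [Ey [EA [EB Hin]]]]]]]]]].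
- by rewrite /in_dom Hz.
- by rewrite /in_dom Hy.
- rewrite !shiftE eqxx (negbTE nab) (negbTE naj) /=; case: (a == i) => /=; lia.
rewrite Ez in Hz; case: Hz => ?; subst fz.
rewrite Ey in Hy; case: Hy => ?; subst fy2.
have mjb : m = j \/ m = b.
  case: (eqVneq m j) => [->|nmj]; first by left.
  case: (eqVneq m b) => [->|nmb]; first by right.
  exfalso; move: hm; rewrite !shiftE (negbTE nmj) (negbTE nmb).
  case: (m == i); case: (m == a) => /=; lia.
case: mjb => ?; subst m.
- have E : shift (shift (shift y i j 1) a b 1) j a 1 = shift y i b 1.
    by apply/ffunP => k; rewrite !shiftE; ring.
  rewrite E in EA.
  have hA := lowS Hl Ey EA; have hB := lowS Hl Ey EB.
  split; first lia.
  move=> H1 [eai|H2].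
    subst a; rewrite Hy' in EB; case: EB => ?; subst B.
    have := fder_ne Ey EA H1; lia.
  have := fder_ne Ey EB H2; lia.
- have E : shift (shift (shift y i j 1) a b 1) b a 1 = shift y i j 1.
    by apply/ffunP => k; rewrite !shiftE; ring.
  rewrite E Hy' in EA; case: EA => ?; subst A.
  have hB := lowS Hl Ey EB.
  split; first lia.
  move=> H1 _; have := fder_ne Ey EB H1; lia.
Qed.

Definition Gok (G : 'I_n -> 'I_n -> Prop) y := forall a b, G a b -> fder f y a b <> Some al.
Definition Gclosed (G : 'I_n -> 'I_n -> Prop) i j := forall a b, G a b -> a = i \/ G a j.

Lemma unit_step y i j fy G : lower y -> f y = Some fy ->
  f (shift y i j 1) = Some (fy + al) -> Gok G y -> Gclosed G i j ->
  lower (shift y i j 1) /\ Gok G (shift y i j 1).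
Proof.
move=> Hl Hy Hy' HG HC; split.
  move=> a b v /fderS [w [Ew Ez]]; rewrite Hy' in Ew; case: Ew => ?; subst w.
  have [h1 _] := core Hl Hy Hy' Ez; lia.
move=> a b Gab /fderS [w [Ew Ez]]; rewrite Hy' in Ew; case: Ew => ?; subst w.
have [_ h2] := core Hl Hy Hy' Ez.
have : fy + 2 * al + 1 <= fy + al + al.
  apply: h2; first exact: HG.
  case: (HC _ _ Gab) => [->|Gaj]; [by left | by right; apply: HG].
lia.
Qed.

Lemma exch_line p i j (t : nat) fp ft : i != j -> f p = Some fp ->
  f (shift p i j (t%:Z + 2)) = Some ft ->
  exists A B, f (shift p i j (t%:Z + 1)) = Some A /\ f (shift p i j 1) = Some B /\
    A + B <= ft + fp.
Proof.
move=> nij Hp Ht.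
have := Hex (x := shift p i j (t%:Z + 2)) (y := p) _ _ (i := i).
case => [|||m [hm [fz [fy2 [A [B [Ez [Ey [EA [EB Hin]]]]]]]]]].
- by rewrite /in_dom Ht.
- by rewrite /in_dom Hp.
- rewrite !shiftE eqxx (negbTE nij) /=; lia.
have ? : m = j.
  apply/eqP; apply: contraTT hm => nmj.
  rewrite !shiftE (negbTE nmj); case: (m == i) => /=; lia.
subst m.
have E : shift (shift p i j (t%:Z + 2)) j i 1 = shift p i j (t%:Z + 1).
  by apply/ffunP => k; rewrite !shiftE; ring.
rewrite E in EA; rewrite Ez in Ht; case: Ht => ?; subst.
rewrite Ey in Hp; case: Hp => ?; subst.
by exists A, B.
Qed.

Lemma L1 p i j fp : i != j -> f p = Some fp -> forall (t : nat) ft,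
  f (shift p i j (t%:Z + 1)) = Some ft ->
  exists g, f (shift p i j 1) = Some g /\ (t%:Z + 1) * (g - fp) <= ft - fp.
Proof.
move=> nij Hp; elim => [|t IH] ft Ht.
  exists ft; split; first by move: Ht; rewrite add0r.
  lia.
have E : (t.+1)%:Z + 1 = t%:Z + 2 by lia.
rewrite E in Ht.
have [A [B [EA [EB Hin]]]] := exch_line nij Hp Ht.
have [g [Eg Hg]] := IH _ EA.
rewrite EB in Eg; case: Eg => ?; subst g.
exists B; split => //; nia.
Qed.

End Core.

Section Move.
Variable n : nat.
Variable f : efun n.
Hypothesis Hex : forall x y, in_dom f x -> in_dom f y -> forall i, x i > y i ->
    exists j, x j < y j /\
      exists fx fy a b, f x = Some fx /\ f y = Some fy /\
        f (shift x j i 1) = Some a /\ f (shift y i j 1) = Some b /\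
        fx + fy >= a + b.
Variable al : int.
Hypothesis al_neg : al < 0.

Lemma move_lem y i j c fy G : lower f al y -> f y = Some fy -> fder f y i j = Some al ->
  is_cbar f y i j c -> Gok f al G y -> Gclosed G i j ->
  [/\ lower f al (shift y i j c), Gok f al G (shift y i j c),
      f (shift y i j c) = Some (fy + c * al), 1 <= c &
      fder f (shift y i j c) i j <> Some al].
Proof.
move=> Hl Hy Hd [c0 [[fy0 [d [Ey0 [Ed Ec]]]] Hmax]] HG HC.
rewrite Hy in Ey0; case: Ey0 => ?; subst fy0.
rewrite Hd in Ed; case: Ed => ?; subst d.
have nij : i != j.
  apply/eqP => eij; subst j; rewrite (fder_ii _ Hy) in Hd; case: Hd; lia.
have [w [Ew Ey1]] := fderS Hd; rewrite Hy in Ew; case: Ew => ?; subst w.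
have c1 : 1 <= c.
  apply: Hmax => //; exists fy, al; split => //; split => //; by rewrite mul1r.
case: c c0 c1 Ec Hmax => [cn|cn] c0 c1 Ec Hmax; last by [].
have inv : forall s : nat, (s <= cn)%N -> [/\ lower f al (shift y i j s),
    Gok f al G (shift y i j s) & f (shift y i j s) = Some (fy + s%:Z * al)].
  elim => [|s IH] hs.
    by rewrite shift0 mul0r addr0.
  have [lp gp ep] := IH (ltnW hs).
  have Ht : f (shift (shift y i j s) i j ((cn - s.+1)%N%:Z + 1)) = Some (fy + cn%:Z * al).
    rewrite shift_add; have -> : s%:Z + ((cn - s.+1)%N%:Z + 1) = cn%:Z by lia.
    exact: Ec.
  have [g [Eg Hg]] := L1 Hex al_neg nij ep Ht.
  have hl := lowS al_neg lp ep Eg.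
  have eg : g = fy + s%:Z * al + al by nia.
  subst g.
  have [l2 g2] := unit_step Hex al_neg lp ep Eg gp HC.
  rewrite shift_add in l2 g2 Eg.
  have E : s%:Z + 1 = (s.+1)%:Z by lia.
  rewrite E in l2 g2 Eg; split => //; rewrite Eg; congr Some; lia.
have [l1 g1 e1] := inv cn (leqnn cn).
split => //.
move=> /fderS [w [Ew Ez]]; rewrite e1 in Ew; case: Ew => ?; subst w.
rewrite shift_add in Ez.
have : (Posz cn + 1) <= Posz cn; last by lia.
apply: Hmax; first lia.
exists fy, al; split => //; split => //; rewrite Ez; congr Some; lia.
Qed.

End Move.

Section Run.
Variable n : nat.
Variable f : efun n.
Hypothesis Hex : forall x y, in_dom f x -> in_dom f y -> forall i, x i > y i ->
    exists j, x j < y j /\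
      exists fx fy a b, f x = Some fx /\ f y = Some fy /\
        f (shift x j i 1) = Some a /\ f (shift y i j 1) = Some b /\
        fx + fy >= a + b.
Variable al : int.
Hypothesis al_neg : al < 0.
Variable x : vec n.
Variable fx : int.
Hypothesis Hx : f x = Some fx.

Definition InvG (G : 'I_n -> 'I_n -> Prop) y :=
  [/\ lower f al y, exists fy, f y = Some fy /\ fy <= fx /\ (y = x \/ fy <= fx + al)
    & Gok f al G y].

Lemma inner_lem (P : seq 'I_n) i js : forall J y y', inner_run f al i js y y' ->
  InvG (fun a b => a \in P \/ (a = i /\ b \in J)) y ->
  InvG (fun a b => a \in P \/ (a = i /\ b \in J ++ js)) y'.
Proof.
elim: js => [|j js IH] J y y' /=.
  by move=> ->; rewrite cats0.
move=> [y1 [Hstep Hrun]] Hinv; rewrite -cat1s catA; apply: (IH _ y1) => //.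
case: Hinv => Hl [fy [Hy [Hle Hd]]] HG.
move: Hstep; case: eqP => [Hder [c [Hc ->]]|Hder ->].
  have HC : Gclosed (fun a b => a \in P \/ (a = i /\ b \in J)) i j.
    by move=> a b [aP|[ai bJ]]; [right; left | left].
  have [l2 g2 e2 c1 nd] := move_lem Hex al_neg Hl Hy Hder Hc HG HC.
  split => //.
    exists (fy + c * al); split => //; split; first nia.
    by right; case: Hd => [e|h]; nia.
  move=> a b [aP|[ai]]; first by apply: g2; left.
  rewrite mem_cat => /orP [bJ|]; first by apply: g2; right.
  by rewrite mem_seq1 => /eqP ->; rewrite ai.
split => //; first by exists fy.
move=> a b [aP|[ai]]; first by apply: HG; left.
rewrite mem_cat => /orP [bJ|]; first by apply: HG; right.
by rewrite mem_seq1 => /eqP ->; rewrite ai.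
Qed.

Lemma outer_lem (js : 'I_n -> seq 'I_n) :
  (forall i, perm_eq (js i) [seq j <- enum 'I_n | j != i]) ->
  forall ord P y y', outer_run f al ord js y y' ->
  InvG (fun a b => a \in P) y -> InvG (fun a b => a \in P ++ ord) y'.
Proof.
move=> Hjs; elim => [|i ord IH] P y y' /=.
  by move=> ->; rewrite cats0.
move=> [y1 [Hin Hout]] Hinv; rewrite -cat1s catA; apply: (IH _ y1) => //.
have H0 : InvG (fun a b => a \in P \/ (a = i /\ b \in [::])) y.
  case: Hinv => Hl Hd HG; split => //.
  by move=> a b [aP|[_ //]]; apply: HG.
have [Hl [fy [Hy Hd]] HG] := inner_lem Hin H0.
split => //; first by exists fy.
move=> a b; rewrite mem_cat mem_seq1 => /orP [aP|/eqP ->].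
  by apply: HG; left.
case: (eqVneq b i) => [->|nbi].
  rewrite (fder_ii _ Hy) => -[]; lia.
apply: HG; right; split => //.
by rewrite (perm_mem (Hjs i)) mem_filter mem_enum nbi.
Qed.

End Run.

Lemma IncS n (f : efun n) x y :
  (forall x y, in_dom f x -> in_dom f y -> forall i, x i > y i ->
    exists j, x j < y j /\
      exists fx fy a b, f x = Some fx /\ f y = Some fy /\
        f (shift x j i 1) = Some a /\ f (shift y i j 1) = Some b /\
        fx + fy >= a + b) ->
  phi f x < 0 -> M_IncSlope f x y ->
  exists fx fy, f x = Some fx /\ f y = Some fy /\ fy <= fx + phi f x /\
    phi f x + 1 <= phi f y.
Proof.
move=> Hex Hneg [ord [js [Hord [Hjs Hrun]]]].
have [fx Hx] := phi_dom Hneg.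
have Hlx : lower f (phi f x) x.
  by apply/phiP; [exact: ltW | ].
have H0 : InvG f (phi f x) x fx (fun a b => a \in [::]) x.
  split => //; by exists fx; split => //; split => //; left.
have [Hl [fy [Hy [Hle Hd]]] HG] := outer_lem Hex Hneg Hjs Hrun H0.
have Hphi : phi f x + 1 <= phi f y.
  apply/phiP; first lia.
  move=> a b v Hv.
  have Ha : a \in [::] ++ ord by rewrite /= (perm_mem Hord) mem_enum.
  have := HG a b Ha; have := Hl a b v Hv; rewrite Hv => h1 h2.
  have : v <> phi f x by move=> e; apply: h2; rewrite e.
  lia.
exists fx, fy; split => //; split => //; split => //.
case: Hd => [e|//]; subst y; lia.
Qed.

Section LocOpt.
Variable n : nat.
Variable f : efun n.
Hypothesis Hex : forall x y, in_dom f x -> in_dom f y -> forall i, x i > y i ->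
    exists j, x j < y j /\
      exists fx fy a b, f x = Some fx /\ f y = Some fy /\
        f (shift x j i 1) = Some a /\ f (shift y i j 1) = Some b /\
        fx + fy >= a + b.
Variable x : vec n.
Variable fx : int.
Hypothesis Hx : f x = Some fx.
Hypothesis Hphi : phi f x = 0.

Definition dist (y : vec n) : int := \sum_k `|y k - x k|.

Lemma dist_ge0 y : 0 <= dist y.
Proof. by apply: sumr_ge0 => k _; exact: normr_ge0. Qed.

Lemma loc_step y v : f y = Some v -> y <> x ->
  exists z A, f z = Some A /\ A <= v /\ dist z + 1 <= dist y.
Proof.
move=> Hy nyx.
have Hl : forall a b w, fder f x a b = Some w -> 0 <= w.
  by apply/phiP; rewrite ?Hphi.
case: (boolP [exists i, x i < y i]) => [/existsP [i hi] | hne]; last first.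
  exfalso; apply: nyx.
  case: (boolP [exists i, y i != x i]) => [/existsP [i0 h0]| hall]; last first.
    apply/ffunP => k; apply/eqP.
    by move: hall; rewrite negb_exists => /forallP /(_ k); rewrite negbK.
  have hle : y i0 <= x i0.
    by move: hne; rewrite negb_exists => /forallP /(_ i0); rewrite -leNgt.
  have hlt : y i0 < x i0 by rewrite lt_neqAle h0 hle.
  have := Hex (x := x) (y := y) _ _ (i := i0).
  case => [|||j [hj _]].
  - by rewrite /in_dom Hx.
  - by rewrite /in_dom Hy.
  - exact: hlt.
  move: hne; rewrite negb_exists => /forallP /(_ j); by rewrite hj.
have := Hex (x := y) (y := x) _ _ (i := i).
case => [|||j [hj [fy2 [fx2 [A [B [Ey [Ex [EA [EB Hin]]]]]]]]]].
- by rewrite /in_dom Hy.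
- by rewrite /in_dom Hx.
- exact: hi.
rewrite Ey in Hy; case: Hy => ?; subst fy2.
move: Ex; rewrite Hx => -[?]; subst fx2.
have hB := Hl _ _ _ (fderE Hx EB).
have nij : i != j by apply/eqP => e; subst j; lia.
exists (shift y j i 1), A; split => //; split; first lia.
rewrite /dist (bigD1 i) //= [X in _ <= X](bigD1 i) //=.
have h1 : `|shift y j i 1 i - x i| + 1 <= `|y i - x i|.
  rewrite shiftE eqxx (negbTE nij) /=.
  rewrite !ger0_norm; lia.
have h2 : \sum_(k | k != i) `|shift y j i 1 k - x k| <= \sum_(k | k != i) `|y k - x k|.
  apply: ler_sum => k nki; rewrite shiftE (negbTE nki).
  case: (eqVneq k j) => [->|nkj] /=.
    rewrite !ler0_norm; lia.
  lia.
by rewrite addrAC; apply: lerD.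
Qed.

Lemma locopt : forall y v, f y = Some v -> fx <= v.
Proof.
suff H : forall N : nat, forall y v, dist y <= N%:Z -> f y = Some v -> fx <= v.
  move=> y v; apply: (H `|dist y|%N); rewrite abszE; exact: ler_norm.
elim => [|N IH] y v Hd Hv.
  case: (eqVneq y x) => [e|ne].
    by subst y; rewrite Hx in Hv; case: Hv => ->.
  have [z [A [Ez [HA Hdz]]]] := loc_step Hv (elimN eqP ne).
  have := dist_ge0 z; lia.
case: (eqVneq y x) => [e|ne].
  by subst y; rewrite Hx in Hv; case: Hv => ->.
have [z [A [Ez [HA Hdz]]]] := loc_step Hv (elimN eqP ne).
have hz : dist z <= N%:Z by lia.
exact: le_trans (IH z A hz Ez) HA.
Qed.

End LocOpt.

Unset Implicit Arguments. Set Strict Implicit.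

Theorem mainTheorem6 (n : nat) (f : efun n) (x0 : vec n) (k : nat) :
  M_convex f -> bounded_dom f -> in_dom f x0 ->
  LSD2_run f x0 k ->
  exists (xmin : vec n) (fx0 fmin : int),
    f x0 = Some fx0 /\ f xmin = Some fmin /\
    (forall x (v : int), f x = Some v -> fmin <= v) /\
    ((k * k)%:Z <= 2 * (fx0 - fmin)).
Proof.
move=> [_ Hex] _ Hx0 [xs [E0 [Hstep Hk]]].
case E: (f x0) Hx0 => [fx0|] // _.
have phib : forall d t, (t + d.+1 = k)%N -> phi f (xs t) <= - (d.+1)%:Z.
  elim => [|d IH] t ht.
    have ht' : (t < k)%N by lia.
    have [h _] := Hstep t ht'; lia.
  have ht' : (t < k)%N by lia.
  have [h hi] := Hstep t ht'.
  have [fa [fb [_ [_ [_ hp]]]]] := IncS Hex h hi.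
  have := IH t.+1 (etrans (addSnnS _ _) ht); lia.
have acc : forall t, (t <= k)%N -> exists v, f (xs t) = Some v /\
    (t%:Z * (2 * k%:Z - t%:Z + 1)) <= 2 * (fx0 - v).
  elim => [|t IH] ht.
    by exists fx0; rewrite E0; split => //; lia.
  have [v [Ev Hv]] := IH (ltnW ht).
  have [h hi] := Hstep t ht.
  have [fa [fb [Ea [Eb [Hdec _]]]]] := IncS Hex h hi.
  rewrite Ev in Ea; case: Ea => ?; subst fa.
  have ht2 : (t + (k - t.+1).+1 = k)%N by lia.
  have := phib _ _ ht2.
  exists fb; split => //; nia.
have [v [Ev Hv]] := acc k (leqnn k).
exists (xs k), fx0, v; split => //; split => //; split.
  move=> y w Hw; have := locopt Hex Ev Hk Hw. exact.
nia.
Qed.
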